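(* Let $F$ be a field with $|F|\ge 4$, and let $G$ be a bipartite graph with $\mathcal{I}_F(G)\neq\emptyset$. Then for every positive integer $d$: $\mathcal{I}_F(G\Box Q_d)\neq\emptyset$, $f(G\Box Q_d)=2^{d-2}|V(G)|$, and $f(G\Box Q_d\Box C_{2k})=2^{d}|V(G)|$ for every integer $k\ge 2$.
   Context: All graphs are finite and simple. For a graph $H$ with a perfect matching $M$, a subset $S\subseteq M$ is a forcing set of $M$ if $S$ is contained in no other perfect matching of $H$; the forcing number $f(H,M)$ is the minimum size of a forcing set of $M$, and $f(H)$ is the minimum of $f(H,M)$ over all perfect matchings $M$ of $H$. A weighted adjacency matrix of a graph $G$ over a field $F$ is a matrix over $F$ with rows and columns indexed by $V(G)$ whose $(u,v)$ entry is nonzero iff $u$ and $v$ are adjacent in $G$. A matrix $A$ is involutory if $A^{-1}=A$. $\mathcal{I}_F(G)$ is the set of involutory weighted adjacency matrices of $G$ over $F$. $Q_d$ is the $d$-dimensional hypercube (vertex set $\{0,1\}^d$, two vectors adjacent iff they differ in exactly one coordinate). $C_{2k}$ is the cycle on $2k$ vertices. The Cartesian product $G\Box H$ has vertex set $V(G)\times V(H)$, with $(g_1,h_1)\sim(g_2,h_2)$ iff either $g_1=g_2$ and $h_1h_2\in E(H)$, or $h_1=h_2$ and $g_1g_2\in E(G)$. *)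

(* Defs.v *)
From mathcomp Require Import all_boot all_order all_algebra.
Set Implicit Arguments. Unset Strict Implicit. Unset Printing Implicit Defensive.
Import GRing.Theory.
Local Open Scope ring_scope.

Definition simple_graph (T : finType) (e : rel T) : Prop :=
  symmetric e /\ irreflexive e.

Definition bipartite (T : finType) (e : rel T) : Prop :=
  exists c : T -> bool, forall u v, e u v -> c u != c v.

Definition cart_prod (T U : finType) (eG : rel T) (eH : rel U) : rel (T * U) :=
  fun x y => ((x.1 == y.1) && eH x.2 y.2) || ((x.2 == y.2) && eG x.1 y.1).

Definition hypercube (d : nat) : rel {ffun 'I_d -> bool} :=
  fun x y => #|[set i | x i != y i]| == 1%N.

Arguments hypercube : clear implicits.

Definition cycle_graph (n : nat) : rel 'I_n :=
  fun i j => (val j == (val i + 1) %% n)%N || (val i == (val j + 1) %% n)%N.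

Arguments cycle_graph : clear implicits.

Definition weighted_adj (F : fieldType) (T : finType) (e : rel T)
  (A : 'M[F]_#|T|) : Prop :=
  forall u v, (A (enum_rank u) (enum_rank v) != 0) = e u v.

Definition involutory (F : fieldType) (n : nat) (A : 'M[F]_n) : Prop :=
  A *m A = 1%:M.

Definition in_IF (F : fieldType) (T : finType) (e : rel T) (A : 'M[F]_#|T|) : Prop :=
  weighted_adj e A /\ involutory A.

Definition IF_nonempty (F : fieldType) (T : finType) (e : rel T) : Prop :=
  exists A : 'M[F]_#|T|, in_IF e A.

Definition is_edge (T : finType) (e : rel T) (s : {set T}) : Prop :=
  exists u v, e u v /\ s = [set u; v].

Definition perfect_matching (T : finType) (e : rel T) (M : {set {set T}}) : Prop :=
  (forall s, s \in M -> is_edge e s) /\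
  (forall x : T, #|[set s in M | x \in s]| = 1%N).

Definition forcing_set (T : finType) (e : rel T) (M S : {set {set T}}) : Prop :=
  S \subset M /\
  (forall M', perfect_matching e M' -> S \subset M' -> M' = M).

Definition forcing_number_is (T : finType) (e : rel T) (n : nat) : Prop :=
  (exists M S, perfect_matching e M /\ forcing_set e M S /\ #|S| = n) /\
  (forall M S, perfect_matching e M -> forcing_set e M S -> (n <= #|S|)%N).

(* Main.v *)
Require Import Defs.
From mathcomp Require Import all_boot all_order all_algebra perm fingroup.
From mathcomp Require Import ring zify.

Module MA.
Set Implicit Arguments. Unset Strict Implicit. Unset Printing Implicit Defensive.
Import GRing.Theory.
Local Open Scope ring_scope.

Section Mx.
Variable F : fieldType.

Definition tomx (U V : finType) (f : U -> V -> F) : 'M[F]_(#|U|, #|V|) :=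
  \matrix_(i, j) f (enum_val i) (enum_val j).

Lemma tomxE (U V : finType) (f : U -> V -> F) u v :
  tomx f (enum_rank u) (enum_rank v) = f u v.
Proof. by rewrite mxE !enum_rankK. Qed.

Lemma sum_enum (V : finType) (G : V -> F) :
  \sum_(k < #|V|) G (enum_val k) = \sum_(w : V) G w.
Proof. by rewrite (big_enum_val (A := V)). Qed.

Lemma tomx_mul (U V W : finType) (f : U -> V -> F) (g : V -> W -> F) :
  tomx f *m tomx g = tomx (fun u w => \sum_(v : V) f u v * g v w).
Proof.
apply/matrixP => i j; rewrite !mxE.
rewrite -(sum_enum (fun v => f (enum_val i) v * g v (enum_val j))).
by apply: eq_bigr => k _; rewrite !mxE.
Qed.

Lemma tomx1 (V : finType) : tomx (fun u v : V => (u == v)%:R) = 1%:M.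
Proof.
apply/matrixP => i j; rewrite !mxE.
by rewrite (inj_eq enum_val_inj).
Qed.

Lemma tomx_of (V : finType) (A : 'M[F]_#|V|) :
  A = tomx (fun u v => A (enum_rank u) (enum_rank v)).
Proof. by apply/matrixP => i j; rewrite mxE !enum_valK. Qed.

Lemma tomx_inj (U V : finType) (f g : U -> V -> F) :
  tomx f = tomx g -> forall u v, f u v = g u v.
Proof. by move=> H u v; rewrite -(tomxE f) -(tomxE g) H. Qed.

Lemma sum_delta_l (V : finType) (u : V) (G : V -> F) :
  \sum_(w : V) (u == w)%:R * G w = G u.
Proof.
rewrite (bigD1 u) //= eqxx mul1r big1 ?addr0 // => w /negbTE.
by rewrite eq_sym => ->; rewrite mul0r.
Qed.

Lemma sum_delta_r (V : finType) (u : V) (G : V -> F) :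
  \sum_(w : V) G w * (w == u)%:R = G u.
Proof.
rewrite (bigD1 u) //= eqxx mulr1 big1 ?addr0 // => w /negbTE ->.
by rewrite mulr0.
Qed.

Definition fIF (V : finType) (e : rel V) (a : V -> V -> F) :=
  (forall u v, (a u v != 0) = e u v) /\
  (forall u v, \sum_(w : V) a u w * a w v = (u == v)%:R).

Lemma IF_of_f (V : finType) (e : rel V) a : fIF e a -> IF_nonempty F e.
Proof.
move=> [Hp Hi]; exists (tomx a); split.
  by move=> u v; rewrite tomxE.
rewrite /involutory tomx_mul -tomx1.
by apply/matrixP => i j; rewrite !mxE Hi.
Qed.

Lemma f_of_IF (V : finType) (e : rel V) :
  IF_nonempty F e -> exists a, fIF e a.
Proof.
move=> [A [Hw Hi]]; exists (fun u v => A (enum_rank u) (enum_rank v)); split.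
  by move=> u v; rewrite Hw.
move=> u v; move: Hi; rewrite /involutory {1 2}(tomx_of A) tomx_mul -tomx1.
by move/tomx_inj/(_ u v).
Qed.

Lemma fIF_iso (V1 V2 : finType) (e1 : rel V1) (e2 : rel V2) (psi : V2 -> V1) a :
  bijective psi -> (forall x y, e2 x y = e1 (psi x) (psi y)) ->
  fIF e1 a -> fIF e2 (fun x y => a (psi x) (psi y)).
Proof.
move=> bpsi He [Hp Hi]; split; first by move=> x y; rewrite Hp He.
move=> x y.
rewrite -(inj_eq (bij_inj bpsi)) -Hi (reindex psi) //.
exact: onW_bij.
Qed.

End Mx.

End MA.
Import MA.

Module MB.
Set Implicit Arguments. Unset Strict Implicit. Unset Printing Implicit Defensive.
Import GRing.Theory.
Local Open Scope ring_scope.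

Section Det.
Variable F : fieldType.

Lemma det_unique (W : finType) (g : W -> W -> F) (tau : W -> W) :
  injective tau -> (forall a, g a (tau a) != 0) ->
  (forall pi : W -> W, injective pi -> (forall a, g a (pi a) != 0) ->
      forall a, pi a = tau a) ->
  \det (tomx g) != 0.
Proof.
move=> itau gtau uniq.
have it : injective (fun i : 'I_#|W| => enum_rank (tau (enum_val i))).
  move=> i j /enum_rank_inj /itau /enum_val_inj //.
pose t : {perm 'I_#|W|} := perm it.
rewrite /determinant (bigD1 t) //= [X in _ + X]big1 ?addr0; last first.
  move=> s st; apply/eqP; rewrite mulf_eq0; apply/orP; right.
  apply/negPn/negP => /prodf_neq0 Hs.
  have ip : injective (fun a => enum_val (s (enum_rank a))).
    by move=> a b /enum_val_inj /perm_inj /enum_rank_inj.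
  have := uniq _ ip.
  have H2 : forall a, g a (enum_val (s (enum_rank a))) != 0.
    by move=> a; have := Hs (enum_rank a) isT; rewrite mxE enum_rankK.
  move=> /(_ H2) Hpt; move/eqP: st; apply; apply/permP => i.
  rewrite permE; have := Hpt (enum_val i); rewrite enum_valK => <-.
  by rewrite enum_valK.
rewrite mulf_neq0 //; first by rewrite expf_neq0 // oppr_eq0 oner_eq0.
apply/prodf_neq0 => i _; rewrite mxE permE enum_rankK; exact: gtau.
Qed.

End Det.

Section PM.
Variable V : finType.
Variable e : rel V.
Variable col : V -> bool.
Hypothesis Hcol : forall u v, e u v -> col u != col v.
Hypothesis Hsym : symmetric e.

Lemma edge_neq u v : e u v -> u != v.
Proof. by move=> /Hcol; apply: contraNneq => ->. Qed.

Lemma edge_pair x y : is_edge e [set x; y] -> e x y.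
Proof.
move=> [u [v [euv Hs]]].
have nuv := edge_neq euv.
have hx : x \in [set u; v] by rewrite -Hs set21.
have hy : y \in [set u; v] by rewrite -Hs set22.
have hu : u \in [set x; y] by rewrite Hs set21.
have hv : v \in [set x; y] by rewrite Hs set22.
case/set2P: hx => Ex; case/set2P: hy => Ey; subst x y.
- by move: hv; rewrite in_set2 orbb eq_sym (negbTE nuv).
- done.
- by rewrite Hsym.
- by move: hu; rewrite in_set2 orbb (negbTE nuv).
Qed.

Lemma is_edge_card s : is_edge e s -> #|s| = 2%N.
Proof. by move=> [u [v [euv ->]]]; rewrite cards2 edge_neq. Qed.

Lemma pm_uniq M s t x : perfect_matching e M ->
  s \in M -> t \in M -> x \in s -> x \in t -> s = t.
Proof.
move=> pmM sM tM xs xt; have := (pmM.2 x).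
move/eqP/cards1P => [z Hz].
have : s \in [set s in M | x \in s] by rewrite inE sM xs.
have : t \in [set s in M | x \in s] by rewrite inE tM xt.
by rewrite Hz !in_set1 => /eqP -> /eqP ->.
Qed.

Lemma pm_exists M x : perfect_matching e M -> exists2 s, s \in M & x \in s.
Proof.
move=> pmM; have := (pmM.2 x) => H.
have : (0 < #|[set s in M | x \in s]|)%N by rewrite H.
by case/card_gt0P => s; rewrite inE => /andP [] sM xs; exists s.
Qed.

Lemma pm_incl_eq M M' : perfect_matching e M -> perfect_matching e M' ->
  M \subset M' -> M' = M.
Proof.
move=> pmM pm' sub; apply/setP => s; apply/idP/idP; last by move/(subsetP sub).
move=> sM'; have [u [v [euv Hs]]] := pm'.1 s sM'.
have [t tM ut] := pm_exists u pmM.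
have tM' := subsetP sub t tM.
have -> : s = t by apply: (pm_uniq pm' sM' tM' _ ut); rewrite Hs set21.
done.
Qed.

End PM.

Section LB.
Variable F : fieldType.
Variable V : finType.
Variable e : rel V.
Variable col : V -> bool.
Hypothesis Hcol : forall u v, e u v -> col u != col v.
Hypothesis Hsym : symmetric e.
Variable M : {set {set V}}.
Hypothesis pmM : perfect_matching e M.

Definition partner x := odflt x [pick y | [set x; y] \in M].

Lemma partner_in x : [set x; partner x] \in M.
Proof.
have [s sM xs] := pm_exists x pmM.
have [u [v [euv Hs]]] := pmM.1 s sM.
have [y Hy] : exists y, [set x; y] \in M.
  move: xs; rewrite Hs; case/set2P => ->; first by exists v; rewrite -Hs.
  by exists u; rewrite setUC -Hs.
rewrite /partner; case: pickP => [z Hz | H0] //=.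
by rewrite H0 in Hy.
Qed.

Lemma partner_edge x : e x (partner x).
Proof. exact: (edge_pair Hcol Hsym (pmM.1 _ (partner_in x))). Qed.

Lemma partner_invol x : partner (partner x) = x.
Proof.
have h1 := partner_in (partner x); have h2 := partner_in x.
have Heq := pm_uniq pmM h1 h2 (set21 _ _) (set22 _ _).
have : partner (partner x) \in [set x; partner x] by rewrite -Heq set22.
case/set2P => // H.
by have := edge_neq Hcol (partner_edge (partner x)); rewrite H eqxx.
Qed.

Variable S : {set {set V}}.
Hypothesis fS : forcing_set e M S.
Variable L : V -> V -> F.
Hypothesis HL : forall x y, (L x y != 0) = e x y.

Lemma SM s : s \in S -> s \in M.
Proof. exact: (subsetP fS.1). Qed.

Lemma lower_bound : (#|V| <= \rank (tomx L) + 2 * #|S|)%N.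
Proof.
set C := cover S; set X := ~: C.
have trivS : trivIset S.
  apply/trivIsetP => A B AS BS AB; rewrite -setI_eq0; apply/eqP/setP => x.
  rewrite inE in_set0; apply/negP => /andP [xA xB].
  by move/eqP: AB; apply; apply: (pm_uniq pmM (SM AS) (SM BS) xA xB).
have cardC : #|C| = (2 * #|S|)%N.
  have /eqP -> : #|cover S| == \sum_(A in S) #|A| by rewrite (leq_card_cover S).2.
  rewrite (eq_bigr (fun _ => 2%N)); first by rewrite sum_nat_const mulnC.
  by move=> A AS; exact: (is_edge_card Hcol (pmM.1 _ (SM AS))).
have cardV : #|V| = (#|X| + 2 * #|S|)%N by rewrite -cardC addnC cardsC.
suff H : (#|X| <= \rank (tomx L))%N.
  by apply: (@leq_trans (#|X| + 2 * #|S|)); [rewrite -cardV | rewrite leq_add2r].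
pose W := {x : V | x \in X}.
have cardW : #|{: W}| = #|X| by rewrite card_sig; apply: eq_card.
have pX : forall x, x \in X -> partner x \in X.
  move=> x; rewrite !inE; apply: contra => /bigcupP [s sS pxs].
  apply/bigcupP; exists s => //.
  have -> : s = [set x; partner x].
    exact: (pm_uniq pmM (SM sS) (partner_in x) pxs (set22 _ _)).
  by rewrite set21.
pose tau (a : W) : W := exist _ (partner (val a)) (pX _ (valP a)).
pose g (a b : W) := L (val a) (val b).
have Hdet : \det (tomx g) != 0.
  apply: (det_unique (tau := tau)).
  - move=> a b /(congr1 val) /= H; apply: val_inj.
    by rewrite -(partner_invol (val a)) H partner_invol.
  - by move=> a; rewrite /g HL /= partner_edge.
  move=> pi ipi Hpi.
  have epi : forall a, e (val a) (val (pi a)) by move=> a; rewrite -HL; exact: Hpi.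
  have [pinv piK pinvK] := injF_bij ipi.
  pose N (b : bool) := S :|: [set [set val a; val (pi a)] | a in [set a : W | col (val a) == b]].
  have pmN : forall b, perfect_matching e (N b).
    move=> b; split.
      move=> s; rewrite inE => /orP [sS | /imsetP [a _ ->]].
        exact: pmM.1 _ (SM sS).
      by exists (val a), (val (pi a)); split.
    move=> y; apply/eqP/cards1P.
    case: (boolP (y \in X)) => yX.
    + pose a0 : W := exist _ y yX.
      case: (boolP (col y == b)) => cy.
      * exists [set y; val (pi a0)]; apply/setP => s; rewrite !inE; apply/idP/idP.
        - case/andP => /orP [sS | /imsetP [a aB ->]] ys.
            by exfalso; move: (yX); rewrite inE => /bigcupP; apply; exists s.
          rewrite inE in aB; case/set2P: ys => Ey.
            by have -> : a = a0 by apply: val_inj.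
          have := Hcol (epi a); rewrite -Ey (eqP aB).
          by move: cy => /eqP ->; rewrite eqxx.
        - move/eqP => ->; rewrite set21 andbT; apply/orP; right.
          by apply/imsetP; exists a0 => //; rewrite inE.
      * exists [set val (pinv a0); y]; apply/setP => s; rewrite !inE; apply/idP/idP.
        - case/andP => /orP [sS | /imsetP [a aB ->]] ys.
            by exfalso; move: (yX); rewrite inE => /bigcupP; apply; exists s.
          rewrite inE in aB; case/set2P: ys => Ey.
            by move: cy; rewrite Ey aB.
          have : pi a = a0 by apply: val_inj.
          by move=> H; rewrite -H piK Ey.
        - move/eqP => ->; rewrite set22 andbT; apply/orP; right.
          apply/imsetP; exists (pinv a0); last by rewrite pinvK.
          rewrite inE; have := Hcol (epi (pinv a0)); rewrite pinvK /=.
          by move: cy; case: (col y); case: (col (val (pinv a0))); case: b.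
    + have : y \in C by move: yX; rewrite inE negbK.
      move=> /bigcupP [s0 s0S ys0]; exists s0; apply/setP => s; rewrite !inE.
      apply/idP/idP.
      - case/andP => /orP [sS | /imsetP [a aB ->]] ys.
          by rewrite (pm_uniq pmM (SM sS) (SM s0S) ys ys0).
        exfalso; move/negP: yX; apply.
        by case/set2P: ys => ->; exact: valP.
      - by move/eqP => ->; rewrite s0S ys0.
  move=> a; apply: val_inj => /=.
  have NM : N (col (val a)) = M by apply: fS.2 (pmN _) (subsetUl _ _).
  have inM : [set val a; val (pi a)] \in M.
    rewrite -NM inE; apply/orP; right; apply/imsetP; exists a => //.
    by rewrite inE.
  have Heq := pm_uniq pmM inM (partner_in (val a)) (set21 _ _) (set21 _ _).
  have : val (pi a) \in [set val a; partner (val a)] by rewrite -Heq set22.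
  case/set2P => // H.
  by have := edge_neq Hcol (epi a); rewrite H eqxx.
have rk : \rank (tomx g) = #|{: W}|.
  by apply: mxrank_unit; rewrite unitmxE unitfE.
have : (\rank (tomx g) <= \rank (tomx L))%N.
  have -> : tomx g = tomx (fun (a : W) (x : V) => (val a == x)%:R) *m tomx L
                     *m tomx (fun (y : V) (b : W) => (y == val b)%:R).
    rewrite !tomx_mul; apply/matrixP => i j; rewrite !mxE.
    rewrite (eq_bigr (fun y => L (val (enum_val i)) y * (y == val (enum_val j))%:R)).
      by rewrite sum_delta_r.
    by move=> y _; rewrite sum_delta_l.
  apply: leq_trans (mxrankM_maxl _ _) _; exact: mxrankM_maxr.
by move=> H; apply: leq_trans H; rewrite rk cardW.
Qed.

End LB.

End MB.
Import MB.

Module MC.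
Set Implicit Arguments. Unset Strict Implicit. Unset Printing Implicit Defensive.
Import GRing.Theory.
Local Open Scope ring_scope.

Lemma rank_factor (F : fieldType) (V U : finType) (L : V -> V -> F)
  (P : V -> U -> F) (Q : U -> V -> F) :
  (forall x y, L x y = \sum_(u : U) P x u * Q u y) ->
  (\rank (tomx L) <= #|U|)%N.
Proof.
move=> HL.
have -> : tomx L = tomx P *m tomx Q.
  by rewrite tomx_mul; apply/matrixP => i j; rewrite !mxE HL.
apply: leq_trans (mxrankM_maxl _ _) _; exact: rank_leq_col.
Qed.

Definition K2 : rel bool := fun b b' => b != b'.

Lemma nat_bool_neq0 (F : fieldType) (b : bool) : ((b%:R : F) != 0) = b.
Proof. by case: b; rewrite ?oner_eq0 ?eqxx. Qed.

Lemma natr_false (F : fieldType) : ((false%:R) : F) = 0. Proof. by []. Qed.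
Lemma natr_true (F : fieldType) : ((true%:R) : F) = 1. Proof. by []. Qed.

Section K2.
Variable F : fieldType.
Variable V : finType.
Variable e : rel V.
Variable a : V -> V -> F.
Hypothesis Ha : fIF e a.
Variable al : F.
Hypothesis al0 : al != 0.
Hypothesis al1 : 1 - al ^+ 2 != 0.

Definition WK2 (x y : V * bool) : F :=
  if x.2 == y.2 then (if x.2 then - al else al) * a x.1 y.1
  else (x.1 == y.1)%:R * (if x.2 then 1 - al ^+ 2 else 1).

Lemma sum_pair (G : V * bool -> F) :
  \sum_(p : V * bool) G p = \sum_(h : V) (G (h, true) + G (h, false)).
Proof.
rewrite (eq_bigr (fun h => \sum_(b : bool) G (h, b))); last first.
  by move=> h _; rewrite big_bool.
by rewrite pair_bigA; apply: eq_bigr => -[h b] _.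
Qed.

Lemma fIF_K2 : fIF (cart_prod e K2) WK2.
Proof.
case: Ha => Hp Hi; split.
  move=> [h b] [h' b']; rewrite /WK2 /cart_prod /K2 /=.
  case: b; case: b' => /=;
    rewrite ?mulf_eq0 ?negb_or ?oppr_eq0 ?al0 ?al1 ?oner_eq0 ?nat_bool_neq0 ?Hp /=;
    by rewrite ?andbT ?andbF ?orbF.
move=> [h b] [h' b']; rewrite sum_pair /WK2 /= xpair_eqE.
case: b; case: b' => /=.
- rewrite (eq_bigr (fun h2 => (h == h2)%:R * ((h2 == h')%:R * (1 - al ^+ 2)) +
     al ^+ 2 * (a h h2 * a h2 h'))); last by move=> h2 _; ring.
  by rewrite big_split /= -mulr_sumr Hi sum_delta_l andbT; ring.
- rewrite (eq_bigr (fun h2 => (- al * (1 - al ^+ 2)) * a h h2 * (h2 == h')%:R +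
     (h == h2)%:R * ((1 - al ^+ 2) * al * a h2 h'))); last by move=> h2 _; ring.
  by rewrite big_split /= sum_delta_r sum_delta_l andbF natr_false; ring.
- rewrite (eq_bigr (fun h2 => (h == h2)%:R * (- al * a h2 h') +
     al * a h h2 * (h2 == h')%:R)); last by move=> h2 _; ring.
  by rewrite big_split /= sum_delta_r sum_delta_l andbF natr_false; ring.
- rewrite (eq_bigr (fun h2 => al ^+ 2 * (a h h2 * a h2 h') +
     (h == h2)%:R * ((h2 == h')%:R * (1 - al ^+ 2)))); last by move=> h2 _; ring.
  by rewrite big_split /= -mulr_sumr Hi sum_delta_l andbT; ring.
Qed.

End K2.

Section Hyper.
Variable d : nat.
Definition ftail (x : {ffun 'I_d.+1 -> bool}) : {ffun 'I_d -> bool} :=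
  [ffun j => x (lift ord0 j)].
Definition fcons (b : bool) (x : {ffun 'I_d -> bool}) : {ffun 'I_d.+1 -> bool} :=
  [ffun i => if unlift ord0 i is Some j then x j else b].

Lemma fconsK (x : {ffun 'I_d.+1 -> bool}) : fcons (x ord0) (ftail x) = x.
Proof.
apply/ffunP => i; rewrite ffunE.
by case: (unliftP ord0 i) => [j -> | ->]; rewrite ?ffunE.
Qed.

Lemma fcons_tail b (x : {ffun 'I_d -> bool}) : ftail (fcons b x) = x.
Proof. by apply/ffunP => j; rewrite !ffunE liftK. Qed.

Lemma fcons_head b (x : {ffun 'I_d -> bool}) : fcons b x ord0 = b.
Proof. by rewrite ffunE unlift_none. Qed.

Lemma card_diff_S (x y : {ffun 'I_d.+1 -> bool}) :
  #|[set i | x i != y i]| =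
  ((x ord0 != y ord0) + #|[set j | ftail x j != ftail y j]|)%N.
Proof.
rewrite -!sum1_card.
rewrite big_mkcond [in RHS]big_mkcond big_ord_recl /= !inE.
apply: f_equal2; first by case: (x ord0 != y ord0).
by apply: eq_bigr => j _; rewrite !inE !ffunE.
Qed.

Lemma ffun_eqS (x y : {ffun 'I_d.+1 -> bool}) :
  (x == y) = (x ord0 == y ord0) && (ftail x == ftail y).
Proof.
apply/eqP/andP => [-> // | [/eqP h /eqP t]].
by rewrite -(fconsK x) -(fconsK y) h t.
Qed.

Lemma card_eq0_ffun (x y : {ffun 'I_d -> bool}) :
  (#|[set j | x j != y j]| == 0%N) = (x == y).
Proof.
rewrite cards_eq0; apply/eqP/eqP => [H | ->].
  apply/ffunP => j; apply/eqP; apply: contraT => Hj.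
  have : j \in [set j | x j != y j] by rewrite inE.
  by rewrite H in_set0.
by apply/setP => j; rewrite !inE eqxx.
Qed.

Variable T : finType.
Variable e : rel T.

Definition hpsi (x : T * {ffun 'I_d.+1 -> bool}) : (T * {ffun 'I_d -> bool}) * bool :=
  ((x.1, ftail x.2), x.2 ord0).
Definition hphi (y : (T * {ffun 'I_d -> bool}) * bool) : T * {ffun 'I_d.+1 -> bool} :=
  (y.1.1, fcons y.2 y.1.2).

Lemma hpsiK : cancel hpsi hphi.
Proof. by move=> [u x]; rewrite /hpsi /hphi /= fconsK. Qed.
Lemma hphiK : cancel hphi hpsi.
Proof. by move=> [[u x] b]; rewrite /hpsi /hphi /= fcons_tail fcons_head. Qed.

Lemma hpsi_edge x y :
  cart_prod e (hypercube d.+1) x y =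
  cart_prod (cart_prod e (hypercube d)) K2 (hpsi x) (hpsi y).
Proof.
case: x => u x; case: y => v y.
rewrite /cart_prod /hpsi /hypercube /K2 /= card_diff_S ffun_eqS xpair_eqE.
rewrite -card_eq0_ffun.
set m := #|[set j | _ ]|.
case: (u == v); case: (x ord0 == y ord0); case: (e u v); rewrite /= ?andbT ?andbF ?orbF //=;
  case: m => [|[|m]] //=.
Qed.

End Hyper.

Lemma hyper0_edge (T : finType) (e : rel T) x y :
  cart_prod e (hypercube 0) x y = e x.1 y.1.
Proof.
rewrite /cart_prod /hypercube.
have -> : x.2 == y.2 by apply/eqP/ffunP => -[].
have -> : #|[set i | x.2 i != y.2 i]| == 1%N = false.
  apply/negbTE; have := max_card [set i | x.2 i != y.2 i].
  by rewrite card_ord leqn0 => /eqP ->.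
by rewrite andbF.
Qed.

End MC.
Import MC.

Module MD.
Set Implicit Arguments. Unset Strict Implicit. Unset Printing Implicit Defensive.
Import GRing.Theory.
Local Open Scope ring_scope.

Lemma cart_sym (T U : finType) (eG : rel T) (eH : rel U) :
  symmetric eG -> symmetric eH -> symmetric (cart_prod eG eH).
Proof.
move=> sG sH [x1 x2] [y1 y2]; rewrite /cart_prod /=.
by rewrite sG sH (eq_sym x1) (eq_sym x2).
Qed.

Lemma K2_sym : symmetric K2.
Proof. by move=> b b'; rewrite /K2 eq_sym. Qed.

Lemma hyper_sym d : symmetric (hypercube d).
Proof.
move=> x y; rewrite /hypercube; congr (_ == _); apply: eq_card => i.
by rewrite !inE eq_sym.
Qed.

Lemma K2_col (V : finType) (e : rel V) (col : V -> bool) :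
  (forall u v, e u v -> col u != col v) ->
  forall p q, cart_prod e K2 p q -> (col p.1 (+) p.2) != (col q.1 (+) q.2).
Proof.
move=> Hc [u b] [v b']; rewrite /cart_prod /K2 /= => /orP [/andP [/eqP -> H] | /andP [/eqP -> /Hc H]].
  by move: H; case: b; case: b'; case: (col v).
by move: H; case: b'; case: (col u); case: (col v).
Qed.

Section KL.
Variable F : fieldType.
Variable V : finType.
Variable e : rel V.
Variable a : V -> V -> F.
Hypothesis Ha : fIF e a.

Definition L1 (p q : V * bool) : F :=
  if p.2 == q.2 then a p.1 q.1 else (p.1 == q.1)%:R.
Definition P1 (p : V * bool) (w : V) : F :=
  if p.2 then a p.1 w else (p.1 == w)%:R.
Definition Q1 (w : V) (q : V * bool) : F :=
  if q.2 then (w == q.1)%:R else a w q.1.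

Lemma L1_pattern p q : (L1 p q != 0) = cart_prod e K2 p q.
Proof.
case: Ha => Hp _; case: p => h b; case: q => h' b'.
rewrite /L1 /cart_prod /K2 /=.
by case: b; case: b' => /=; rewrite ?nat_bool_neq0 ?Hp ?andbT ?andbF ?orbF.
Qed.

Lemma L1_factor p q : L1 p q = \sum_(w : V) P1 p w * Q1 w q.
Proof.
case: Ha => _ Hi; case: p => h b; case: q => h' b'.
rewrite /L1 /P1 /Q1 /=.
case: b; case: b' => /=.
- by rewrite sum_delta_r.
- by rewrite Hi.
- by rewrite sum_delta_l.
- by rewrite sum_delta_l.
Qed.

Variable col : V -> bool.
Hypothesis Hcol : forall u v, e u v -> col u != col v.
Hypothesis Hsym : symmetric e.
Variable V2 : finType.
Variable e2 : rel V2.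
Variable psi : V2 -> V * bool.
Hypothesis He : forall x y, e2 x y = cart_prod e K2 (psi x) (psi y).

Definition col2 (x : V2) := col (psi x).1 (+) (psi x).2.

Lemma col2P x y : e2 x y -> col2 x != col2 y.
Proof. by rewrite He => H; exact: (K2_col Hcol H). Qed.

Lemma sym2 : symmetric e2.
Proof. by move=> x y; rewrite !He cart_sym //; exact: K2_sym. Qed.

Lemma lower_K2 M S : perfect_matching e2 M -> forcing_set e2 M S ->
  (#|V2| <= #|V| + 2 * #|S|)%N.
Proof.
move=> pmM fS.
have := lower_bound col2P sym2 pmM fS (L := fun x y => L1 (psi x) (psi y)).
move=> /(_ _) H; apply: leq_trans (H _) _.
  by move=> x y; rewrite L1_pattern He.
rewrite leq_add2r.
apply: (rank_factor (P := fun x w => P1 (psi x) w) (Q := fun w y => Q1 w (psi y))).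
by move=> x y; rewrite L1_factor.
Qed.

End KL.

Lemma is_edge_at (V : finType) (e : rel V) s x :
  symmetric e -> is_edge e s -> x \in s -> exists y, s = [set x; y] /\ e x y.
Proof.
move=> Hs [u [v [euv ->]]]; case/set2P => ->; first by exists v.
by exists u; rewrite setUC Hs.
Qed.

Section UpK2.
Variable V : finType.
Variable e : rel V.
Variable col : V -> bool.
Hypothesis Hcol : forall u v, e u v -> col u != col v.
Hypothesis Hsym : symmetric e.
Variable V2 : finType.
Variable e2 : rel V2.
Variable psi : V2 -> V * bool.
Variable phi : V * bool -> V2.
Hypothesis psiK : cancel psi phi.
Hypothesis phiK : cancel phi psi.
Hypothesis He : forall x y, e2 x y = cart_prod e K2 (psi x) (psi y).

Definition EK (v : V) := [set phi (v, false); phi (v, true)].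
Definition MK := [set EK v | v in V].
Definition SK (b : bool) := [set EK v | v in [set v | col v == b]].

Lemma EK_inj : injective EK.
Proof.
move=> v w H; have : phi (v, false) \in EK w by rewrite -H set21.
by case/set2P => /(congr1 psi); rewrite !phiK => -[].
Qed.

Lemma in_EK y v : (y \in EK v) = ((psi y).1 == v).
Proof.
apply/set2P/eqP => [[] -> | <-]; rewrite ?phiK //.
by case: (psi y) (psiK y) => w [] <-; [right | left].
Qed.

Lemma pmMK : perfect_matching e2 MK.
Proof.
split.
  move=> s /imsetP [v _ ->]; exists (phi (v, false)), (phi (v, true)); split => //.
  by rewrite He !phiK /cart_prod /K2 /= eqxx.
move=> y; apply/eqP/cards1P; exists (EK (psi y).1); apply/setP => s.
rewrite !inE; apply/andP/eqP => [[/imsetP [v _ ->]] | ->].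
  by rewrite in_EK => /eqP ->.
by split; [apply/imsetP; exists (psi y).1 | rewrite in_EK].
Qed.

Lemma forcing_SK b : forcing_set e2 MK (SK b).
Proof.
have symm2 : symmetric e2 by move=> x y; rewrite !He cart_sym //; exact: K2_sym.
split.
  by apply/subsetP => s /imsetP [v _ ->]; apply/imsetP; exists v.
move=> M' pm' sub; apply: (pm_incl_eq pmMK pm').
apply/subsetP => s /imsetP [v _ ->].
case: (boolP (col v == b)) => cv.
  by apply: (subsetP sub); apply/imsetP; exists v; rewrite ?inE.
have [s' s'M xs'] := pm_exists (phi (v, false)) pm'.
have [y [Hs' exy]] := is_edge_at symm2 (pm'.1 _ s'M) xs'.
move: exy; rewrite He phiK /cart_prod /K2 /=.
case Ey: (psi y) => [w c] /=.
case/orP => [/andP [/eqP vw cc] | /andP [/eqP cf evw]].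
  subst w; move: cc; case: c Ey => // Ey _.
  by have -> : EK v = s' by rewrite Hs' /EK -Ey psiK.
subst c.
have cw : col w == b.
  by move: (Hcol evw) cv; case: (col v); case: (col w); case: (b).
have EwM : EK w \in M' by apply: (subsetP sub); apply/imsetP; exists w; rewrite ?inE.
have yE : y \in EK w by rewrite in_EK Ey.
have := pm_uniq pm' s'M EwM _ yE; rewrite Hs' set22 => /(_ isT) H.
have : phi (v, false) \in EK w by rewrite -H set21.
rewrite in_EK phiK /= => /eqP vw; subst w.
by have := Hcol evw; rewrite eqxx.
Qed.

Lemma card_SK : (#|SK false| + #|SK true| = #|V|)%N.
Proof.
rewrite /SK !card_imset //; try exact: EK_inj.
rewrite -(cardsC [set v | col v == false]); congr addn.
by apply: eq_card => v; rewrite !inE; case: (col v).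
Qed.

End UpK2.

End MD.
Import MD.

Module ME.
Set Implicit Arguments. Unset Strict Implicit. Unset Printing Implicit Defensive.
Import GRing.Theory.
Local Open Scope ring_scope.

Lemma field_alpha (F : fieldType) :
  (exists s : seq F, uniq s /\ (4 <= size s)%N) ->
  exists al : F, al != 0 /\ 1 - al ^+ 2 != 0.
Proof.
move=> [s [us ss]].
have : has (fun x : F => (x != 0) && (1 - x ^+ 2 != 0)) s.
  apply/negPn/negP => /hasPn H.
  have : (size s <= size ([:: 0; 1; -1]%R : seq F))%N.
    apply: uniq_leq_size => // x /H; rewrite negb_and !negbK.
    case/orP => [/eqP -> | ]; first by rewrite inE eqxx.
    rewrite subr_eq0 eq_sym sqrf_eq1 => /orP [/eqP -> | /eqP ->];
      by rewrite !inE eqxx ?orbT.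
  by move=> H2; have := leq_trans ss H2.
by case/hasP => x _ /andP [h1 h2]; exists x.
Qed.

Section HyperAll.
Variable F : fieldType.
Variable T : finType.
Variable e : rel T.

Lemma card_VH d : #|{: T * {ffun 'I_d -> bool}}| = (#|T| * 2 ^ d)%N.
Proof. by rewrite card_prod card_ffun card_bool card_ord. Qed.

Lemma hpsi_bij d : bijective (@hpsi d T).
Proof. by exists (@hphi d T); [exact: hpsiK | exact: hphiK]. Qed.

Lemma IF_hyper (a : T -> T -> F) (al : F) : fIF e a -> al != 0 -> 1 - al ^+ 2 != 0 ->
  forall d, exists ad : _ -> _ -> F, fIF (cart_prod e (hypercube d)) ad.
Proof.
move=> Ha al0 al1; elim => [|d [ad Had]].
  exists (fun x y => a x.1 y.1).
  apply: (fIF_iso (e1 := e) (psi := fst) _ _ Ha).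
    exists (fun u => (u, [ffun _ => false])) => // -[u x] /=.
    by congr pair; apply/ffunP => -[].
  by move=> x y; exact: hyper0_edge.
exists (fun x y => WK2 ad al (hpsi x) (hpsi y)).
apply: (fIF_iso (psi := @hpsi d T) (hpsi_bij d)); first exact: hpsi_edge.
exact: fIF_K2.
Qed.

Lemma bip_hyper (col : T -> bool) : (forall u v, e u v -> col u != col v) ->
  forall d, exists cd : _ -> bool, forall x y, cart_prod e (hypercube d) x y -> cd x != cd y.
Proof.
move=> Hc; elim => [|d [cd Hcd]].
  by exists (fun x => col x.1) => x y; rewrite hyper0_edge; exact: Hc.
exists (col2 cd (@hpsi d T)) => x y.
apply: (col2P Hcd); exact: hpsi_edge.
Qed.

Lemma sym_hyper d : symmetric e -> symmetric (cart_prod e (hypercube d)).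
Proof. by move=> Hs; apply: cart_sym => //; exact: hyper_sym. Qed.

Theorem hyper_forcing (a : T -> T -> F) (col : T -> bool) d :
  fIF e a -> (forall u v, e u v -> col u != col v) -> symmetric e ->
  (forall d', exists ad : _ -> _ -> F, fIF (cart_prod e (hypercube d')) ad) ->
  (forall n, forcing_number_is (cart_prod e (hypercube d.+1)) n ->
             (4 * n = 2 ^ d.+1 * #|T|)%N) /\
  (exists n, forcing_number_is (cart_prod e (hypercube d.+1)) n).
Proof.
move=> Ha Hc Hs IFall.
have [ad Had] := IFall d.
have [cd Hcd] := bip_hyper Hc d.
have Hsd := sym_hyper (d := d) Hs.
have He := @hpsi_edge d T e.
have low := lower_K2 Had Hcd Hsd He.
have cV2 : #|{: T * {ffun 'I_d.+1 -> bool}}| = (2 * #|{: T * {ffun 'I_d -> bool}}|)%N.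
  by rewrite !card_VH expnS mulnCA.
have pmM := pmMK (@hpsiK d T) (@hphiK d T) He.
have fS := fun b => forcing_SK Hcd Hsd (@hpsiK d T) (@hphiK d T) He b.
have cS := card_SK cd (@hphiK d T).
set Sf := SK cd (@hphi d T) false.
set St := SK cd (@hphi d T) true.
set N := #|{: T * {ffun 'I_d -> bool}}| in cV2 cS low.
have lowS : forall S M, perfect_matching (cart_prod e (hypercube d.+1)) M ->
    forcing_set (cart_prod e (hypercube d.+1)) M S -> (N <= 2 * #|S|)%N.
  move=> S M pm fs; have := low _ _ pm fs; rewrite cV2; lia.
have l1 := lowS _ _ pmM (fS false).
have l2 := lowS _ _ pmM (fS true).
have eS : (2 * #|Sf| = N)%N.
  move: l1 l2 cS; rewrite /Sf.
  move: #|SK cd (@hphi d T) false| #|SK cd (@hphi d T) true| => p q; lia.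
have cT : (2 ^ d.+1 * #|T| = 2 * N)%N by rewrite /N card_VH expnS; lia.
rewrite cT; clear cT.
split.
  move=> n [[M [S [pm [fs cs]]]] Hmin].
  have := Hmin _ _ pmM (fS false); rewrite -/Sf => h1.
  have := lowS _ _ pm fs; rewrite cs => h2.
  move: h1 h2 eS; move: #|Sf| => p; lia.
exists #|Sf|; split.
  by exists (MK (@hphi d T)), Sf; split; [exact: pmM | split; [exact: fS | done]].
move=> M S pm fs; have := lowS _ _ pm fs; move: eS; move: #|Sf| => p; lia.
Qed.

End HyperAll.

End ME.
Import ME.

Module MG.
Set Implicit Arguments. Unset Strict Implicit. Unset Printing Implicit Defensive.
Import GRing.Theory.

Definition pat (N j : nat) : nat :=
  if (N %% 4 == 2) && (j < 6) then j %% 3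
  else (j - (if N %% 4 == 2 then 6 else 0)) %% 4.

Lemma pat_lt N j : (pat N j < 4)%N.
Proof. rewrite /pat; case: ifP => _; lia. Qed.

Section Ord.
Variable N : nat.
Hypothesis N4 : (4 <= N)%N.
Hypothesis Nev : ~~ odd N.

Lemma N2 : (N %% 2 = 0)%N.
Proof. by rewrite modn2; case: (odd N) Nev. Qed.

Lemma pat1 j : (j.+2 < N)%N ->
  [&& pat N j != pat N j.+1, pat N j.+1 != pat N j.+2 & pat N j != pat N j.+2].
Proof.
move=> h3; rewrite /pat; have := N2.
case H4: (N %% 4 == 2); case H6: (j < 6); case H6': (j.+1 < 6); case H6'': (j.+2 < 6);
  rewrite /=; lia.
Qed.

Lemma pat2 :
  [&& pat N N.-2 != pat N N.-1, pat N N.-1 != pat N 0 & pat N N.-2 != pat N 0].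
Proof.
rewrite /pat; have := N2.
case H4: (N %% 4 == 2); case H6: (N.-2 < 6); case H6': (N.-1 < 6); rewrite /=; lia.
Qed.

Lemma pat3 :
  [&& pat N N.-1 != pat N 0, pat N 0 != pat N 1 & pat N N.-1 != pat N 1].
Proof.
rewrite /pat; have := N2.
case H4: (N %% 4 == 2); case H6': (N.-1 < 6); rewrite /=; lia.
Qed.

Definition nxv (j : nat) := if j.+1 == N then 0%N else j.+1.
Definition pvv (j : nat) := if j == 0%N then N.-1 else j.-1.

Lemma nx_lt (j : 'I_N) : (nxv j < N)%N.
Proof. have := ltn_ord j; rewrite /nxv; case: ifP => ?; lia. Qed.
Lemma pv_lt (j : 'I_N) : (pvv j < N)%N.
Proof. have := ltn_ord j; rewrite /pvv; case: ifP => ?; lia. Qed.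

Definition nx (j : 'I_N) : 'I_N := Ordinal (nx_lt j).
Definition pv (j : 'I_N) : 'I_N := Ordinal (pv_lt j).

Lemma nxK j : pv (nx j) = j.
Proof.
apply: val_inj => /=; have := ltn_ord j; rewrite /nxv.
case: ifP => H1; rewrite /pvv /=; lia.
Qed.

Lemma pvK j : nx (pv j) = j.
Proof.
apply: val_inj => /=; have := ltn_ord j; rewrite /pvv.
case: ifP => H1; rewrite /nxv /=; case: ifP => H2; lia.
Qed.

Lemma nx_neq j : (nx j == j) = false.
Proof. apply/negbTE; rewrite -val_eqE /= /nxv; have := ltn_ord j; case: ifP => ?; lia. Qed.
Lemma pv_neq j : (pv j == j) = false.
Proof. apply/negbTE; rewrite -val_eqE /= /pvv; have := ltn_ord j; case: ifP => ?; lia. Qed.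
Lemma pvnx_neq j : (pv j == nx j) = false.
Proof.
apply/negbTE; rewrite -val_eqE /= /pvv /nxv; have := ltn_ord j.
case: ifP => H1; case: ifP => H2; lia.
Qed.

Lemma pv_eq i j : (i == pv j) = (j == nx i).
Proof.
apply/eqP/eqP => [-> | ->]; by rewrite ?pvK ?nxK.
Qed.

Lemma odd_nx j : odd (nx j) = ~~ odd j.
Proof.
rewrite /= /nxv; case: eqP => [H | _] //=.
have : odd j.+1 = odd N by rewrite H.
by rewrite /=; case: (odd j) => //=; case: (odd N) Nev.
Qed.

Lemma odd_pv j : odd (pv j) = ~~ odd j.
Proof. by rewrite -{2}(pvK j) odd_nx negbK. Qed.

Lemma N0 : (0 < N)%N. Proof. lia. Qed.
Definition o0 : 'I_N := Ordinal (ltn_trans (isT : 0 < 3)%N N4).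
Definition o1 : 'I_N := Ordinal (ltn_trans (isT : 1 < 3)%N N4).
Definition o2 : 'I_N := Ordinal (ltn_trans (isT : 2 < 3)%N N4).
Lemma nx_o0 : nx o0 = o1.
Proof. apply: val_inj => /=; rewrite /nxv; case: ifP => ?; lia. Qed.
Lemma nx_o1 : nx o1 = o2.
Proof. apply: val_inj => /=; rewrite /nxv; case: ifP => ?; lia. Qed.

Lemma nx_mod (i : 'I_N) : ((i + 1) %% N)%N = nx i.
Proof.
rewrite /= /nxv addn1; case: ifP => [/eqP -> | H]; first by rewrite modnn.
by rewrite modn_small //; have := ltn_ord i; move: H; lia.
Qed.

Lemma cycleE i j : cycle_graph N i j = (i == pv j) || (i == nx j).
Proof.
rewrite /cycle_graph !nx_mod pv_eq; congr orb; by rewrite val_eqE.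
Qed.

Lemma nxE (k : 'I_N) : val (nx k) = nxv (val k). Proof. by []. Qed.

Lemma pat_triple (j : 'I_N) :
  [&& pat N j != pat N (nx j), pat N (nx j) != pat N (nx (nx j))
    & pat N j != pat N (nx (nx j))].
Proof.
have lt := ltn_ord j.
case: (ltnP j.+2 N) => h.
  have e1 : val (nx j) = j.+1 by rewrite /= /nxv; case: ifP => ?; lia.
  have e2 : val (nx (nx j)) = j.+2 by rewrite nxE e1 /nxv; case: ifP => ?; lia.
  by rewrite e2 e1; exact: pat1.
case: (ltnP j.+1 N) => h'.
  have ej : nat_of_ord j = N.-2 by lia.
  have e1 : val (nx j) = N.-1 by rewrite /= /nxv; case: ifP => ?; lia.
  have e2 : val (nx (nx j)) = 0%N by rewrite nxE e1 /nxv; case: ifP => ?; lia.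
  by rewrite e2 e1 ej; exact: pat2.
have ej : nat_of_ord j = N.-1 by lia.
have e1 : val (nx j) = 0%N by rewrite /= /nxv; case: ifP => ?; lia.
have e2 : val (nx (nx j)) = 1%N by rewrite nxE e1 /nxv; case: ifP => ?; lia.
by rewrite e2 e1 ej; exact: pat3.
Qed.

Local Open Scope ring_scope.

Variable F : fieldType.
Variable sq : seq F.
Hypothesis us : uniq sq.
Hypothesis ss : (4 <= size sq)%N.

Definition colF (j : 'I_N) : F := nth 0 sq (pat N j).

Lemma colF_neq (i j : 'I_N) : pat N i != pat N j -> colF i != colF j.
Proof.
rewrite /colF nth_uniq //; apply: leq_trans (pat_lt _ _) ss.
Qed.

Lemma colF_triple (j : 'I_N) :
  [&& colF j != colF (nx j), colF (nx j) != colF (nx (nx j))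
    & colF j != colF (nx (nx j))].
Proof.
by case/and3P: (pat_triple j) => h1 h2 h3; rewrite !colF_neq.
Qed.

Definition zA j := colF (pv j) - colF (nx j).
Definition zB j := colF (nx j) - colF j.
Definition zC j := colF j - colF (pv j).

Lemma zA_neq0 (j : 'I_N) : zA j != 0.
Proof.
rewrite /zA subr_eq0; have := colF_triple (pv j); rewrite pvK.
by case/and3P.
Qed.
Lemma zB_neq0 (j : 'I_N) : zB j != 0.
Proof. by rewrite /zB subr_eq0 eq_sym; case/and3P: (colF_triple j). Qed.
Lemma zC_neq0 (j : 'I_N) : zC j != 0.
Proof.
rewrite /zC subr_eq0 eq_sym; have := colF_triple (pv j); rewrite pvK.
by case/and3P.
Qed.
Lemma col02 : colF o2 - colF o0 != 0.
Proof.
rewrite subr_eq0 eq_sym; have := colF_triple o0; rewrite nx_o0 nx_o1.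
by case/and3P.
Qed.

Variable V : finType.
Variable e : rel V.
Variable a : V -> V -> F.
Hypothesis Ha : fIF e a.

Definition Wc (x y : V * 'I_N) : F :=
  (x.2 == y.2)%:R * (zA y.2 * a x.1 y.1) +
  (x.1 == y.1)%:R * ((x.2 == pv y.2)%:R * zB y.2 + (x.2 == nx y.2)%:R * zC y.2).

Lemma Wc_pattern x y : (Wc x y != 0) = cart_prod e (cycle_graph N) x y.
Proof.
case: Ha => Hp _; case: x => u i; case: y => v j.
rewrite /Wc /cart_prod /= cycleE.
case: (i =P j) => [<- | /eqP nij].
  have h1 : (i == pv i) = false by rewrite eq_sym pv_neq.
  have h2 : (i == nx i) = false by rewrite eq_sym nx_neq.
  rewrite h1 h2 /= natr_true natr_false !mul0r !addr0 mulr0 addr0 mul1r andbF /=.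
  by rewrite mulf_eq0 negb_or zA_neq0 Hp.
rewrite natr_false mul0r add0r /=.
case: (i =P pv j) => [-> | /eqP nipj].
  rewrite ?eqxx pvnx_neq /= ?natr_true ?natr_false ?mul0r ?addr0 ?mul1r ?andbT ?orbF.
  by rewrite mulf_eq0 negb_or nat_bool_neq0 zB_neq0 andbT.
rewrite /= natr_false mul0r add0r.
case: (i =P nx j) => [_ | _].
  rewrite ?eqxx /= ?natr_true ?mul1r ?andbT ?orbF.
  by rewrite mulf_eq0 negb_or nat_bool_neq0 zC_neq0 andbT.
by rewrite /= natr_false mul0r mulr0 eqxx andbF.
Qed.

Definition ct (b : bool) (j : 'I_N) : F := if b then colF j else 1.
Definition Pj (j : 'I_N) (x u : V) : F := if odd j then a x u else (x == u)%:R.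
Definition Rj (j : 'I_N) (x v : V) : F := if odd j then (x == v)%:R else a x v.

Definition kap (p : bool * V) (y : V * 'I_N) : F := ct p.1 y.2 * Pj y.2 p.2 y.1.

Lemma sum_prodI (U1 U2 : finType) (G : U1 * U2 -> F) :
  \sum_(p : U1 * U2) G p = \sum_(j : U2) \sum_(u : U1) G (u, j).
Proof.
rewrite exchange_big pair_bigA /=; apply: eq_bigr => -[u j] _ //.
Qed.

Lemma kerW p q : \sum_(y : V * 'I_N) kap p y * Wc y q = 0.
Proof.
case: Ha => _ Hi; case: p => t x; case: q => v j'.
rewrite sum_prodI.
rewrite (eq_bigr (fun j => zA j' * ct t j * (\sum_(u : V) Pj j x u * a u v) * (j == j')%:R +
    zB j' * ct t j * Pj j x v * (j == pv j')%:R + zC j' * ct t j * Pj j x v * (j == nx j')%:R)).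
  rewrite !big_split /= !sum_delta_r.
  have E1 : \sum_(u : V) Pj j' x u * a u v = Rj j' x v.
    rewrite /Pj /Rj; case: (odd j'); first by rewrite Hi.
    by rewrite sum_delta_l.
  have E2 : Pj (pv j') x v = Rj j' x v by rewrite /Pj /Rj odd_pv; case: (odd j').
  have E3 : Pj (nx j') x v = Rj j' x v by rewrite /Pj /Rj odd_nx; case: (odd j').
  rewrite E1 E2 E3 /ct /zA /zB /zC; case: t; ring.
move=> j _; rewrite /kap /Wc /=.
rewrite (eq_bigr (fun u => (j == j')%:R * (zA j' * ct t j * (Pj j x u * a u v)) +
   (ct t j * Pj j x u * ((j == pv j')%:R * zB j' + (j == nx j')%:R * zC j')) * (u == v)%:R)).
  by rewrite big_split /= sum_delta_r -mulr_sumr -mulr_sumr; ring.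
by move=> u _; ring.
Qed.

Definition r0 (t : bool) : F :=
  if t then - 1 / (colF o2 - colF o0) else colF o2 / (colF o2 - colF o0).
Definition r2 (t : bool) : F :=
  if t then 1 / (colF o2 - colF o0) else - colF o0 / (colF o2 - colF o0).
Definition rho (y : V * 'I_N) (p : bool * V) : F :=
  (y.1 == p.2)%:R * ((y.2 == o0)%:R * r0 p.1 + (y.2 == o2)%:R * r2 p.1).

Lemma o02 : (o0 == o2) = false. Proof. by []. Qed.

Lemma KR p p' : \sum_(y : V * 'I_N) kap p y * rho y p' = (p == p')%:R.
Proof.
case: p => t x; case: p' => t' y.
rewrite sum_prodI.
rewrite (eq_bigr (fun j => ct t j * Pj j x y * r0 t' * (j == o0)%:R +
                          ct t j * Pj j x y * r2 t' * (j == o2)%:R)).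
  rewrite big_split /= !sum_delta_r /Pj /= xpair_eqE.
  have D := col02.
  case: t; case: t'; case: (x == y); rewrite /ct /r0 /r2 /= ?natr_false ?natr_true;
    by field.
move=> j _; rewrite /kap /rho /=.
rewrite (eq_bigr (fun u => (ct t j * Pj j x u * ((j == o0)%:R * r0 t' + (j == o2)%:R * r2 t'))
   * (u == y)%:R)); last by move=> u _; ring.
by rewrite sum_delta_r; ring.
Qed.

Lemma rankWc : (\rank (tomx Wc) + 2 * #|V| <= #|{: V * 'I_N}|)%N.
Proof.
pose K := tomx kap.
have KW : K *m tomx Wc = 0.
  by rewrite tomx_mul; apply/matrixP => i j; rewrite !mxE kerW.
have KR1 : K *m tomx rho = 1%:M.
  rewrite tomx_mul -tomx1; apply/matrixP => i j; by rewrite !mxE KR.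
have rK : \rank K = #|{: bool * V}|.
  apply/eqP; rewrite eqn_leq rank_leq_row /=.
  by rewrite -{1}(mxrank1 F #|{: bool * V}|) -KR1 mxrankM_maxl.
have sub : (K <= kermx (tomx Wc))%MS by apply/sub_kermxP.
have := mxrankS sub; rewrite mxrank_ker rK card_prod card_bool.
have := rank_leq_row (tomx Wc).
move: (\rank (tomx Wc)) => r; rewrite !card_prod ?card_ord; lia.
Qed.

Variable col : V -> bool.
Hypothesis Hcol : forall u v, e u v -> col u != col v.
Hypothesis Hsym : symmetric e.

Definition colC (x : V * 'I_N) := col x.1 (+) odd x.2.

Lemma colCP x y : cart_prod e (cycle_graph N) x y -> colC x != colC y.
Proof.
case: x => u i; case: y => v j; rewrite /cart_prod /colC /= cycleE.
case/orP => [/andP [/eqP <- /orP [/eqP -> | /eqP ->]] | /andP [/eqP <- /Hcol H]].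
- by rewrite odd_pv; case: (col u); case: (odd j).
- by rewrite odd_nx; case: (col u); case: (odd j).
- by move: H; case: (col u); case: (col v); case: (odd i).
Qed.

Lemma symC : symmetric (cart_prod e (cycle_graph N)).
Proof.
apply: cart_sym => // i j; by rewrite /cycle_graph orbC.
Qed.

Lemma lowerC M S : perfect_matching (cart_prod e (cycle_graph N)) M ->
  forcing_set (cart_prod e (cycle_graph N)) M S -> (#|V| <= #|S|)%N.
Proof.
move=> pm fs.
have := lower_bound colCP symC pm fs Wc_pattern.
have := rankWc; move: (\rank (tomx Wc)) => r; rewrite !card_prod ?card_ord; lia.
Qed.

Definition EC (u : V) (j : 'I_N) : {set V * 'I_N} := [set (u, j); (u, nx j)].
Definition MC := [set EC x.1 x.2 | x in [set x : V * 'I_N | odd x.2 == col x.1]].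
Definition st (u : V) := if col u then o1 else o0.
Definition SC := [set EC u (st u) | u in V].

Lemma in_EC (y : V * 'I_N) u j : (y \in EC u j) = (y.1 == u) && ((y.2 == j) || (y.2 == nx j)).
Proof.
case: y => w k; rewrite /EC in_set2 !xpair_eqE /=.
by case: (w == u); case: (k == j); case: (k == nx j).
Qed.

Lemma card_SC : #|SC| = #|V|.
Proof.
rewrite card_imset // => u w H.
have : (u, st u) \in EC w (st w) by rewrite -H /EC set21.
by rewrite in_EC /= => /andP [/eqP ->].
Qed.

Lemma pv_val (j : 'I_N) : (0 < j)%N -> nat_of_ord (pv j) = (nat_of_ord j).-1.
Proof. by move=> h; rewrite /= /pvv; case: ifP => // /eqP H; move: h; rewrite H. Qed.

Lemma pmMC : perfect_matching (cart_prod e (cycle_graph N)) MC.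
Proof.
split.
  move=> s /imsetP [[u j] _ ->]; exists (u, j), (u, nx j); split => //.
  by rewrite /cart_prod /= eqxx cycleE nxK eqxx.
move=> [u j]; apply/eqP/cards1P.
exists (if odd j == col u then EC u j else EC u (pv j)).
apply/setP => s; rewrite !inE; apply/andP/eqP.
  move=> [/imsetP [[w k] Hk ->]]; rewrite inE /= in Hk.
  rewrite in_EC /= => /andP [/eqP uw /orP [/eqP jk | /eqP jk]]; subst w.
    by subst k; rewrite Hk.
  have kpv : k = pv j by rewrite jk nxK.
  subst k; move: Hk; rewrite odd_pv.
  by case: (odd j); case: (col u).
case: ifP => H ->.
  split; last by rewrite in_EC /= !eqxx.
  by apply/imsetP; exists (u, j); rewrite // inE.
split; last by rewrite in_EC /= pvK !eqxx orbT.
apply/imsetP; exists (u, pv j); rewrite // inE /= odd_pv.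
by move: H; case: (odd j); case: (col u).
Qed.

Lemma forcing_SC : forcing_set (cart_prod e (cycle_graph N)) MC SC.
Proof.
have stM : forall u, odd (st u) == col u by move=> u; rewrite /st; case: (col u).
split.
  apply/subsetP => s /imsetP [u _ ->]; apply/imsetP; exists (u, st u) => //.
  by rewrite inE /=.
move=> M' pm' sub.
have inS : forall u, EC u (st u) \in M'.
  by move=> u; apply: (subsetP sub); apply/imsetP; exists u.
have claim : forall n u (j : 'I_N), (j <= n)%N -> odd j == col u -> EC u j \in M'.
  elim => [|n IH] u j.
    rewrite leqn0 => /eqP j0 cj.
    have -> : j = st u.
      apply: val_inj; rewrite /st; move: cj; rewrite j0 /=.
      by case: (col u).
    exact: inS.
  rewrite leq_eqVlt ltnS => /orP [/eqP jn | ]; last exact: IH.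
  case: n IH jn => [|n] IH jn cj.
    have -> : j = st u.
      apply: val_inj; rewrite /st; move: cj; rewrite jn /=.
      by case: (col u).
    exact: inS.
  have [s' s'M xs'] := pm_exists (u, j) pm'.
  have [y [Hs' exy]] := is_edge_at symC (pm'.1 _ s'M) xs'.
  case: y Hs' exy => w k Hs'; rewrite /cart_prod /= cycleE.
  have j0 : (0 < j)%N by rewrite jn.
  case/orP => [/andP [/eqP uw /orP [/eqP jpk | /eqP jnk]] | /andP [/eqP jk ewu]].
  - subst w; have kE : k = nx j by rewrite jpk pvK.
    by rewrite /EC -kE -Hs'.
  - subst w; have kpv : k = pv j by rewrite jnk nxK.
    subst k.
    have k0 : (0 < pv j)%N by rewrite pv_val // jn.
    have Hk2 : EC u (pv (pv j)) \in M'.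
      apply: IH; first by rewrite pv_val // pv_val // jn.
      by rewrite !odd_pv negbK.
    have yE : (u, pv j) \in EC u (pv (pv j)) by rewrite in_EC /= pvK !eqxx orbT.
    have ys' : (u, pv j) \in s' by rewrite Hs' set22.
    have Hs := pm_uniq pm' s'M Hk2 ys' yE.
    have : (u, j) \in EC u (pv (pv j)) by rewrite -Hs.
    rewrite in_EC /= eqxx /= => /orP [/eqP H | /eqP H].
      exfalso; have h3 := f_equal (@nat_of_ord N) H.
      have h1 := pv_val j0; have h2 := pv_val k0; lia.
    by move: H; rewrite pvK => H; have := pv_neq j; rewrite -H eqxx.
  - subst k.
    have k0 := pv_val j0.
    have Hk1 : EC w (pv j) \in M'.
      apply: IH; first by rewrite k0 jn.
      rewrite odd_pv; move: (Hcol ewu) cj.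
      by case: (odd j); case: (col u); case: (col w).
    have yE : (w, j) \in EC w (pv j) by rewrite in_EC /= pvK !eqxx orbT.
    have ys' : (w, j) \in s' by rewrite Hs' set22.
    have Hs := pm_uniq pm' s'M Hk1 ys' yE.
    have : (u, j) \in EC w (pv j) by rewrite -Hs.
    rewrite in_EC /= => /andP [/eqP uw _]; subst w.
    by have := Hcol ewu; rewrite eqxx.
apply: (pm_incl_eq pmMC pm'); apply/subsetP => s /imsetP [[u j] Hj ->].
by apply: (claim j) => //; rewrite inE in Hj.
Qed.

Theorem cycle_forcing :
  forcing_number_is (cart_prod e (cycle_graph N)) #|V|.
Proof.
split; first by exists MC, SC; split; [exact: pmMC | split; [exact: forcing_SC | exact: card_SC]].
by move=> M S pm fs; exact: lowerC pm fs.
Qed.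

End Ord.

End MG.
Import MG.


Theorem corollary2p2 (F : fieldType) (T : finType) (e : rel T) :
  (exists s : seq F, uniq s /\ (4 <= size s)%N) ->
  simple_graph e -> bipartite e -> IF_nonempty F e ->
  forall d : nat, (0 < d)%N ->
    [/\ IF_nonempty F (cart_prod e (hypercube d)),
        forall n, forcing_number_is (cart_prod e (hypercube d)) n ->
                  (4 * n = 2 ^ d * #|T|)%N,
        (exists n, forcing_number_is (cart_prod e (hypercube d)) n) &
        forall k : nat, (2 <= k)%N ->
          forcing_number_is
            (cart_prod (cart_prod e (hypercube d)) (cycle_graph (2 * k)))
            (2 ^ d * #|T|)%N].
Proof.
move=> Hs [Hsym Hirr] [col Hcol] HIF d d0.
have [al [al0 al1]] := field_alpha Hs.
have [a Ha] := f_of_IF HIF.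
have IFall := IF_hyper Ha al0 al1.
case: d d0 => // d _.
have [H2 H3] := hyper_forcing d Ha Hcol Hsym IFall.
have [ad Had] := IFall d.+1.
split => //; first exact: IF_of_f Had.
move=> k k2.
have [cd Hcd] := bip_hyper Hcol d.+1.
have Hsd := sym_hyper (d := d.+1) Hsym.
have [sq [us ss]] := Hs.
have N4 : (4 <= 2 * k)%N by lia.
have Nev : ~~ odd (2 * k) by rewrite oddM.
have := cycle_forcing N4 Nev us ss Had Hcd Hsd.
by rewrite card_VH (mulnC #|T|).
Qed.
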